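(* Let $D$ be a finite set of values, and let $Y$ and $Z$ be finite sets of variables with $Y \cap Z = \emptyset$. Let $w \colon \overline{D^{Y\cup Z}} \to \mathbb{R}$ be a subset-monotone ranking function. Let $R \subseteq \overline{D^Y}$ and $S \subseteq \overline{D^Z}$. If $\tau$ is a maximal element of $R$ with respect to $w$ and $\sigma$ is a maximal element of $S$ with respect to $w$, then $\tau \times \sigma$ is a maximal element of $R \wedge S = \{\tau' \times \sigma' \mid \tau' \in R,\ \sigma' \in S\}$ with respect to $w$.
   Context: For finite sets $D$ (values) and $X$ (variables), a partial assignment is a map $\nu \colon X \to D \cup \{\bot\}$, where $\bot$ means ''undefined''; $\overline{D^X}$ denotes the set of partial assignments. Two partial assignments $\tau \in \overline{D^Y}$, $\sigma \in \overline{D^Z}$ with $Y\cap Z=\emptyset$ are disjoint, and $\tau\times\sigma \in \overline{D^{Y\cup Z}}$ is the partial assignment agreeing with $\tau$ on $Y$ and with $\sigma$ on $Z$. A $(D,X)$-ranking function is a function $w \colon \overline{D^X}\to\mathbb{R}$; for $Y \subseteq X$ and $\tau \in \overline{D^Y}$, $w(\tau)$ means $w$ applied to $\tau$ extended by assigning $\bot$ to every variable of $X\setminus Y$. $w$ is subset-monotone if for every $Y \subseteq X$, every $\tau_1,\tau_2 \in \overline{D^Y}$ with $w(\tau_1)\le w(\tau_2)$, and every $\sigma \in \overline{D^{X\setminus Y}}$, we have $w(\sigma\times\tau_1)\le w(\sigma\times\tau_2)$. An element $\tau$ of a set $R$ of partial assignments is maximal with respect to $w$ if $w(\tau') \le w(\tau)$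 for every $\tau' \in R$. *)

(* Defs.v *)
From HB Require Import structures.
From mathcomp Require Import all_boot all_order all_algebra.
From mathcomp Require Import reals.
Set Implicit Arguments. Unset Strict Implicit. Unset Printing Implicit Defensive.
Import Order.TTheory GRing.Theory Num.Theory.
Local Open Scope ring_scope.

(* Partial assignments over the ambient variable set X with values in D:
   maps X -> D ∪ {⊥}, with ⊥ = None. *)
Definition passign (D X : finType) := {ffun X -> option D}.

(* nu is a partial assignment over Y (extended by ⊥ outside Y), i.e. an
   element of \overline{D^Y} viewed inside \overline{D^X}. *)
Definition pa_on (D X : finType) (Y : {set X}) (nu : passign D X) : Prop :=
  forall x, x \notin Y -> nu x = None.

Definition pa_prod (D X : finType) (Y : {set X}) (tau sigma : passign D X)
  : passign D X := [ffun x => if x \in Y then tau x else sigma x].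

Definition subset_monotone (R : realType) (D X : finType)
  (w : passign D X -> R) : Prop :=
  forall (Y : {set X}) (tau1 tau2 sigma : passign D X),
    pa_on Y tau1 -> pa_on Y tau2 -> pa_on (~: Y) sigma ->
    w tau1 <= w tau2 ->
    w (pa_prod Y tau1 sigma) <= w (pa_prod Y tau2 sigma).

Definition maximal_wrt (R : realType) (D X : finType)
  (w : passign D X -> R) (RR : {set passign D X}) (tau : passign D X) : Prop :=
  tau \in RR /\ forall tau', tau' \in RR -> w tau' <= w tau.

Definition pa_join (D X : finType) (Y : {set X}) (RR SS : {set passign D X})
  : {set passign D X} :=
  [set pa_prod Y t s | t in RR, s in SS].

(* Main.v *)
Require Import Defs.
From HB Require Import structures.
From mathcomp Require Import all_boot all_order all_algebra.
From mathcomp Require Import reals.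
Import Order.TTheory GRing.Theory Num.Theory.
Local Open Scope ring_scope.

Lemma memZ (X : finType) (Y Z : {set X}) :
  [disjoint Y & Z] -> Y :|: Z = [set: X] -> forall x, (x \in Z) = (x \notin Y).
Proof.
move=> hd hc x.
have h1 : x \in Y :|: Z by rewrite hc inE.
have h2 : x \notin Y :&: Z by rewrite (disjoint_setI0 hd) inE.
move: h1 h2; rewrite !inE; case: (x \in Y); case: (x \in Z) => //.
Qed.

Theorem lemma2p2 (R : realType) (D X : finType) (Y Z : {set X})
  (hdisj : [disjoint Y & Z]) (hcov : Y :|: Z = [set: X])
  (w : passign D X -> R) (hw : subset_monotone w)
  (RR SS : {set passign D X})
  (hR : forall t, t \in RR -> pa_on Y t)
  (hS : forall s, s \in SS -> pa_on Z s)
  (tau sigma : passign D X) :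
  maximal_wrt w RR tau -> maximal_wrt w SS sigma ->
  maximal_wrt w (pa_join Y RR SS) (pa_prod Y tau sigma).
Proof.
move=> [tR tM] [sS sM].
have hZ := @memZ X Y Z hdisj hcov.
split; first by apply/imset2P; exists tau sigma.
move=> u /imset2P [t' s' t'R s'S ->].
have onC : forall s : passign D X, pa_on Z s -> pa_on (~: Y) s.
  by move=> s hs x; rewrite in_setC negbK => hx; apply: hs; rewrite hZ hx.
have onCZ : forall t : passign D X, pa_on Y t -> pa_on (~: Z) t.
  by move=> t ht x; rewrite in_setC negbK hZ => hx; apply: ht.
have sw : forall a b : passign D X, pa_prod Y a b = pa_prod Z b a.
  by move=> a b; apply/ffunP => x; rewrite !ffunE hZ; case: (x \in Y).
apply: (le_trans (hw Y t' tau s' (hR _ t'R) (hR _ tR) (onC _ (hS _ s'S)) (tM _ t'R))).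
rewrite !sw.
exact: (hw Z s' sigma tau (hS _ s'S) (hS _ sS) (onCZ _ (hR _ tR)) (sM _ s'S)).
Qed.
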